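(* Let $n,g$ be integers with $0\leq g\leq \lfloor \frac{n-3}{2}\rfloor$, and let $T$ be a tree of order $n$. Then $T$ has an $R_g$-cutset with $\kappa_g(T)=n-2g-2$ if and only if $T$ is of type $T_n^*$ (with respect to $g$).
   Context: All graphs are finite and simple. A tree $T$ of order $n$ is of type $T_n^*$ (with respect to $g$) if it contains a vertex $v$ such that $T-v$ has two connected components with exactly $g+1$ vertices each, and every other connected component of $T-v$ (there may be none) has at most $g$ vertices. Equivalently, $T$ is obtained from two trees $T',T''$ of order $g+1$ and trees $T_1,\ldots,T_r$ ($r\ge 0$) each of order at most $g$ with $\sum_i|V(T_i)|=n-2g-3$, by adding a new vertex $v$ and one edge from $v$ to each of $T',T'',T_1,\ldots,T_r$. A set $S\subseteq V(G)$ is a cutset if $G-S$ is disconnected. For a non-negative integer $g$, a cutset $S$ is an $R_g$-cutset if every connected component of $G-S$ has at least $g+1$ vertices. If $G$ has at least one $R_g$-cutset, the $g$-extra connectivity $\kappa_g(G)$ is the minimum cardinality of an $R_g$-cutset of $G$. *)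

(* Defs.v *)
(* A simple graph is a symmetric irreflexive relation e on a finType T. *)
From mathcomp Require Import all_boot.
Set Implicit Arguments. Unset Strict Implicit. Unset Printing Implicit Defensive.

Section Graphs.
Variables (T : finType) (e : rel T).

Definition del_rel (S : {set T}) : rel T :=
  [rel x y | [&& e x y, x \notin S & y \notin S]].

Definition comp_of (S : {set T}) (x : T) : {set T} :=
  [set y | (y \notin S) && connect (del_rel S) x y].

Definition components (S : {set T}) : {set {set T}} :=
  [set comp_of S x | x in ~: S].

Definition connected_graph : Prop := forall x y : T, connect e x y.

Definition has_cycle : Prop :=
  exists (x : T) (p : seq T),
    [/\ path e x p, uniq (x :: p), 2 <= size p & e (last x p) x].

Definition is_tree : Prop := connected_graph /\ ~ has_cycle.

Definition cutset (S : {set T}) : Prop := 1 < #|components S|.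

Definition Rg_cutset (g : nat) (S : {set T}) : Prop :=
  cutset S /\ forall C, C \in components S -> g + 1 <= #|C|.

(* kappa_g(G) = k : k is the minimum cardinality of an R_g-cutset
   (in particular an R_g-cutset exists). *)
Definition kappa_g_eq (g k : nat) : Prop :=
  (exists S, Rg_cutset g S /\ #|S| = k) /\
  (forall S, Rg_cutset g S -> k <= #|S|).

Definition type_Tstar (g : nat) : Prop :=
  exists v : T, exists C1 C2 : {set T},
    [/\ [/\ C1 \in components [set v], C2 \in components [set v] & C1 != C2],
        #|C1| = g + 1, #|C2| = g + 1 &
        forall C, C \in components [set v] -> C != C1 -> C != C2 -> #|C| <= g].

End Graphs.

(* Main.v *)
Require Import Defs.
From mathcomp Require Import all_boot.
From mathcomp Require Import zify.
Set Implicit Arguments. Unset Strict Implicit. Unset Printing Implicit Defensive.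

Lemma upath (T : finType) (r : rel T) x y : connect r x y ->
  exists q, [/\ path r x q, uniq (x :: q) & last x q = y].
Proof. case/connectP => p pp ->; case: (shortenP pp) => q pq uq _; by exists q. Qed.

Section Aux.
Variables (T : finType) (e : rel T).
Hypothesis esym : symmetric e.
Hypothesis eirr : irreflexive e.

Lemma del_sym (R : {set T}) : symmetric (del_rel e R).
Proof.
move=> x y; rewrite /del_rel /= esym.
by case: (x \in R); case: (y \in R); rewrite /= ?andbF.
Qed.

Lemma cdsym (R : {set T}) : connect_sym (del_rel e R).
Proof. exact: sym_connect_sym (del_sym R). Qed.

Lemma in_comp (R : {set T}) x y : (y \in comp_of e R x) = (y \notin R) && connect (del_rel e R) x y.
Proof. by rewrite inE. Qed.

Lemma comp_eq (R : {set T}) x y : y \in comp_of e R x -> comp_of e R y = comp_of e R x.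
Proof.
rewrite in_comp => /andP[_ cxy]; apply/setP=> z; rewrite !in_comp.
by rewrite (same_connect (cdsym R) cxy).
Qed.

Lemma comp_self (R : {set T}) x : x \notin R -> x \in comp_of e R x.
Proof. by rewrite in_comp => ->; rewrite connect0. Qed.

Lemma comp_disj (R : {set T}) x y z : z \in comp_of e R x -> z \in comp_of e R y ->
  comp_of e R x = comp_of e R y.
Proof. by move=> /comp_eq <- /comp_eq <-. Qed.

Lemma compI0 (R : {set T}) x y : comp_of e R x != comp_of e R y ->
  comp_of e R x :&: comp_of e R y = set0.
Proof.
move=> neq; apply/setP => z; rewrite inE in_set0; apply/negP => /andP[h1 h2].
by rewrite (comp_disj h1 h2) eqxx in neq.
Qed.

Lemma comp_mono (R S : {set T}) x : R \subset S -> comp_of e S x \subset comp_of e R x.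
Proof.
move=> RS; apply/subsetP=> y; rewrite !in_comp => /andP[yS c].
rewrite (contra (subsetP RS y)) //=.
apply: connect_sub c => a b /= /and3P[eab aS bS]; apply: connect1.
rewrite /del_rel /= eab.
by rewrite (contra (subsetP RS a)) // (contra (subsetP RS b)).
Qed.

Lemma path_del_notin (R : {set T}) x p z : path (del_rel e R) x p -> z \in p -> z \notin R.
Proof.
elim: p x => //= y p IH x /andP[/and3P[_ _ yR] pp]; rewrite inE => /orP[/eqP->//|].
exact: IH pp.
Qed.

Lemma path_del_e (R : {set T}) x p : path (del_rel e R) x p -> path e x p.
Proof. elim: p x => //= y p IH x /andP[/and3P[-> _ _] /IH]. done. Qed.

Lemma path_e_del (R : {set T}) x p : path e x p -> x \notin R ->
  (forall z, z \in p -> z \notin R) -> path (del_rel e R) x p.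
Proof.
elim: p x => //= y p IH x /andP[exy pp] xR H.
apply/andP; split; first by rewrite /del_rel /= exy xR H ?mem_head.
apply: IH => // [|z zp]; first by apply: H; rewrite mem_head.
by apply: H; rewrite inE zp orbT.
Qed.

Lemma compL (R S : {set T}) x : (forall y, y \in comp_of e R x -> y \notin S) ->
  comp_of e R x \subset comp_of e S x.
Proof.
move=> H; apply/subsetP=> y yC; have yS := H _ yC.
move: (yC); rewrite in_comp => /andP[yR /connectP[p pp ly]].
rewrite in_comp yS /=; apply/connectP; exists p => //.
case: p pp ly => [|z p] pp ly //.
apply: path_e_del (path_del_e pp) _ _.
  apply: H; apply: comp_self; by case/andP: pp => /and3P[].
move=> w wp; apply: H; rewrite in_comp (path_del_notin pp wp) /=.
by apply: (path_connect pp); rewrite inE wp orbT.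
Qed.

Lemma neighbor v x : connected_graph e -> x != v ->
  exists y, e v y /\ connect (del_rel e [set v]) y x.
Proof.
move=> conn xv; case: (upath (conn v x)) => [[|y q]] [/= pq uq lq].
  by rewrite lq eqxx in xv.
case/andP: pq => evy pq; case/andP: uq => vyq uq.
exists y; split => //; apply/connectP; exists q => //.
apply: path_e_del => //.
  by rewrite inE; apply/eqP => yv; rewrite yv inE eqxx in vyq.
move=> z zq; rewrite inE; apply/eqP => zv; rewrite -zv inE zq orbT in vyq; done.
Qed.

Lemma Fsep v a w : ~ has_cycle e -> e v a -> e v w -> a != w ->
  ~~ connect (del_rel e [set v]) a w.
Proof.
move=> nc eva evw aw; apply/negP => /upath [q [pq uq lq]].
apply: nc; exists v, (a :: q); split.
- by rewrite /= eva (path_del_e pq).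
- rewrite cons_uniq uq andbT inE negb_or; apply/andP; split.
    by apply/eqP => va; rewrite va eirr in eva.
  apply/negP => vq; move: (path_del_notin pq vq); by rewrite inE eqxx.
- by case: q pq uq lq => [|z q] //= _ _ la; rewrite la eqxx in aw.
- by rewrite /= lq esym.
Qed.

Lemma walk (S : {set T}) a b : ~~ connect (del_rel e S) a b -> b \notin S ->
  forall p x, path e x p -> uniq (x :: p) -> x \notin S ->
  connect (del_rel e S) a x -> last x p = b ->
  exists u v w, [/\ connect (del_rel e S) a u, u \notin S, v \in S, e u v &
    e v w] /\ (u != w /\ connect (del_rel e [set v]) w b).
Proof.
move=> nab bS; elim=> [|y p IH] x /=.
  by move=> _ _ _ cax lx; rewrite -lx cax in nab.
move=> /andP[exy pp] /andP[xyp uyp] xS cax lb.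
case yS: (y \in S).
  case: p pp uyp lb IH xyp => [|z p] pp uyp lb IH xyp.
    by rewrite -lb yS in bS.
  case/andP: pp => eyz pp.
  exists x, y, z; split => //; split.
    by apply/eqP => xz; rewrite xz !inE eqxx orbT in xyp.
  apply/connectP; exists p => //; case/andP: uyp => yzp _.
  apply: path_e_del => //.
    by rewrite inE; apply/eqP => zy; rewrite zy mem_head in yzp.
  move=> t tp; rewrite inE; apply/eqP => ty; by rewrite -ty inE tp orbT in yzp.
apply: (IH y) => //; first by rewrite yS.
apply: connect_trans cax (connect1 _); by rewrite /del_rel /= exy xS yS.
Qed.

Lemma vnot v x : v \notin comp_of e [set v] x.
Proof. by rewrite in_comp inE eqxx. Qed.

Lemma Gcut g v (U : {set T}) x1 x2 : v \notin U ->
  (forall x, x \in U -> comp_of e [set v] x \subset U) ->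
  (forall x, x \in U -> g + 1 <= #|comp_of e [set v] x|) ->
  x1 \in U -> x2 \in U -> comp_of e [set v] x1 != comp_of e [set v] x2 ->
  Rg_cutset e g (~: U).
Proof.
move=> vU clos sz x1U x2U neq.
have vsub: [set v] \subset ~: U by rewrite sub1set inE vU.
have Heq : forall x, x \in U -> comp_of e (~: U) x = comp_of e [set v] x.
  move=> x xU; apply/eqP; rewrite eqEsubset comp_mono //=.
  apply: compL => y yC; rewrite inE negbK; exact: (subsetP (clos x xU)).
have Hc : components e (~: U) = [set comp_of e [set v] x | x in U].
  by rewrite /components setCK; apply: eq_in_imset => x xU /=; exact: Heq.
split.
  rewrite /cutset Hc; apply/card_gt1P.
  by exists (comp_of e [set v] x1), (comp_of e [set v] x2); rewrite !imset_f.
by move=> C; rewrite Hc => /imsetP[x xU ->]; exact: sz.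
Qed.

Lemma clos_comp (R : {set T}) x y (U : {set T}) : comp_of e R y \subset U ->
  x \in comp_of e R y -> comp_of e R x \subset U.
Proof. by move=> h /comp_eq ->. Qed.


Lemma Kstar g n v u w : #|T| = n ->
  (forall S, Rg_cutset e g S -> n - 2 * g - 2 <= #|S|) ->
  u != v -> w != v -> comp_of e [set v] u != comp_of e [set v] w ->
  g + 1 <= #|comp_of e [set v] u| -> g + 1 <= #|comp_of e [set v] w| ->
  type_Tstar e g.
Proof.
move=> cT kmin uv wv neq szu szw.
have memc : forall x, x != v -> comp_of e [set v] x \in components e [set v].
  by move=> x xv; apply: imset_f; rewrite !inE.
have IAB := compI0 neq.
have cU : #|comp_of e [set v] u :|: comp_of e [set v] w|
   = #|comp_of e [set v] u| + #|comp_of e [set v] w|.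
  by rewrite cardsU IAB cards0 subn0.
have cut1 : Rg_cutset e g (~: (comp_of e [set v] u :|: comp_of e [set v] w)).
  apply: (Gcut (v := v) (x1 := u) (x2 := w)) => //.
  - by rewrite !in_setU !negb_or !vnot.
  - move=> x; rewrite in_setU => /orP[] xC; apply: clos_comp xC;
      by rewrite ?subsetUl ?subsetUr.
  - by move=> x; rewrite in_setU => /orP[] /comp_eq ->.
  - by rewrite in_setU comp_self // inE.
  - by rewrite in_setU comp_self ?orbT // inE.
have := kmin _ cut1; have := cardsC (comp_of e [set v] u :|: comp_of e [set v] w).
have := max_card (comp_of e [set v] u :|: comp_of e [set v] w).
rewrite cU cT => h1 h2 h3.
have eA : #|comp_of e [set v] u| = g + 1 by lia.
have eB : #|comp_of e [set v] w| = g + 1 by lia.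
exists v, (comp_of e [set v] u), (comp_of e [set v] w); split => //.
  by split => //; apply: memc.
move=> C /imsetP[z zR ->] nA nB; rewrite leqNgt; apply/negP => big.
have cU3 : #|comp_of e [set v] u :|: comp_of e [set v] w :|: comp_of e [set v] z|
  = #|comp_of e [set v] u| + #|comp_of e [set v] w| + #|comp_of e [set v] z|.
  rewrite cardsU cU setIUl [comp_of e [set v] u :&: _]setIC.
  by rewrite [comp_of e [set v] w :&: _]setIC (compI0 nA) (compI0 nB) setU0 cards0 subn0.
have cut2 : Rg_cutset e g (~: (comp_of e [set v] u :|: comp_of e [set v] w
     :|: comp_of e [set v] z)).
  apply: (Gcut (v := v) (x1 := u) (x2 := w)) => //.
  - by rewrite !in_setU !negb_or !vnot.
  - move=> x; rewrite !in_setU => /orP[/orP[]|] xC; apply: clos_comp xC;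
      by rewrite ?subsetUl ?subsetUr // subsetU // ?subsetUl ?subsetUr ?orbT.
  - by move=> x; rewrite !in_setU => /orP[/orP[]|] /comp_eq ->; rewrite ?eA ?eB ?addn1.
  - by rewrite !in_setU comp_self // inE.
  - by rewrite !in_setU comp_self ?orbT // inE.
have := kmin _ cut2; have := cardsC (comp_of e [set v] u :|: comp_of e [set v] w
     :|: comp_of e [set v] z).
have := max_card (comp_of e [set v] u :|: comp_of e [set v] w
     :|: comp_of e [set v] z).
rewrite cU3 cT => k1 k2 k3; lia.
Qed.

End Aux.

Theorem theorem4p3 (T : finType) (e : rel T) (n g : nat) :
  symmetric e -> irreflexive e -> is_tree e -> #|T| = n -> 2 * g + 3 <= n ->
  ((exists S : {set T}, Rg_cutset e g S) /\ kappa_g_eq e g (n - 2 * g - 2))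
  <-> type_Tstar e g.
Proof.
move=> esym eirr [conn nc] cT hn; split.
  case=> _ [[S [[cut szC] cardS]] kmin].
  case/card_gt1P: cut => D1 [D2 [/imsetP[a aS' ->] /imsetP[b bS' ->] nD]].
  have aS : a \notin S by move: aS'; rewrite inE.
  have bS : b \notin S by move: bS'; rewrite inE.
  have nab : ~~ connect (del_rel e S) a b.
    apply/negP => cab; have : b \in comp_of e S a by rewrite in_comp bS cab.
    by move/(comp_eq esym) => E; rewrite E eqxx in nD.
  case: (upath (conn a b)) => q [pq uq lq].
  have [u [v [w [[cau uS vS euv evw] [uw cwb]]]]] :=
    walk nab bS pq uq aS (connect0 _ _) lq.
  have uv : u != v by apply: contraNneq uS => ->.
  have wv : w != v by apply/eqP => wv; rewrite wv eirr in evw.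
  have bv : b != v by apply: contraNneq bS => ->.
  have uC : u \in comp_of e S a by rewrite in_comp uS cau.
  have ACA : comp_of e S a \subset comp_of e [set v] u.
    by rewrite -(comp_eq esym uC) comp_mono // sub1set.
  have bC : b \in comp_of e [set v] w by rewrite in_comp inE bv cwb.
  have BCB : comp_of e S b \subset comp_of e [set v] w.
    by rewrite -(comp_eq esym bC) comp_mono // sub1set.
  apply: (Kstar esym (u:=u) (w:=w) (v:=v) cT kmin) => //.
  - apply/eqP => E.
    have : w \in comp_of e [set v] u by rewrite E comp_self // inE.
    rewrite in_comp => /andP[_ cuw].
    by have := Fsep esym eirr nc (etrans (esym v u) euv) evw uw; rewrite cuw.
  - exact: leq_trans (szC _ (imset_f _ aS')) (subset_leq_card ACA).
  - exact: leq_trans (szC _ (imset_f _ bS')) (subset_leq_card BCB).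
case=> v [C1 [C2 [[m1 m2 n12] s1 s2 oth]]].
case/imsetP: m1 => x1 x1R E1; case/imsetP: m2 => x2 x2R E2.
have big2 : forall C, C \in components e [set v] -> g + 1 <= #|C| -> C = C1 \/ C = C2.
  move=> C mC sC; case: (eqVneq C C1) => [->|n1]; [by left|].
  case: (eqVneq C C2) => [->|n2]; [by right|].
  by have := oth C mC n1 n2; lia.
subst C1 C2.
have x1v : x1 != v by move: x1R; rewrite !inE.
have x2v : x2 != v by move: x2R; rewrite !inE.
have cU : #|comp_of e [set v] x1 :|: comp_of e [set v] x2| = 2 * g + 2.
  by rewrite cardsU (compI0 esym n12) cards0 subn0 s1 s2; lia.
have cut1 : Rg_cutset e g (~: (comp_of e [set v] x1 :|: comp_of e [set v] x2)).
  apply: (Gcut (v := v) (x1 := x1) (x2 := x2)) => //.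
  - by rewrite in_setU negb_or !vnot.
  - move=> x; rewrite in_setU => /orP[] xC; apply: (clos_comp esym) xC;
      by rewrite ?subsetUl ?subsetUr.
  - by move=> x; rewrite in_setU => /orP[] /(comp_eq esym) ->; rewrite ?s1 ?s2.
  - by rewrite in_setU comp_self // inE.
  - by rewrite in_setU comp_self ?orbT // inE.
have kmin : forall S, Rg_cutset e g S -> n - 2 * g - 2 <= #|S|.
  move=> S [cut szC].
  have vS : v \in S.
    apply/negPn/negP => vS.
    have [x [xS vD]] : exists x, x \notin S /\ v \notin comp_of e S x.
      case/card_gt1P: cut => D1 [D2 [/imsetP[y1 y1S ->] /imsetP[y2 y2S ->] nD]].
      rewrite inE in y1S; rewrite inE in y2S.
      case: (boolP (v \in comp_of e S y1)) => h1; last by exists y1.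
      case: (boolP (v \in comp_of e S y2)) => h2; last by exists y2.
      by rewrite (comp_disj esym h1 h2) eqxx in nD.
    have xv : x != v by apply: contraNneq vD => <-; rewrite comp_self.
    have sD : g + 1 <= #|comp_of e S x| by apply: szC; apply: imset_f; rewrite inE.
    have DC : comp_of e S x \subset comp_of e [set v] x.
      by apply: compL => y yD; rewrite inE; apply: contraNneq vD => <-.
    have mC : comp_of e [set v] x \in components e [set v] by apply: imset_f; rewrite !inE.
    have sC : #|comp_of e [set v] x| = g + 1.
      by case: (big2 _ mC (leq_trans sD (subset_leq_card DC))) => ->.
    have DeqC : comp_of e S x = comp_of e [set v] x.
      by apply/eqP; rewrite eqEcard DC sC sD.
    case: (neighbor conn xv) => y [evy cyx].
    have yC : y \in comp_of e [set v] x.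
      rewrite in_comp inE (cdsym esym) cyx andbT.
      by apply/eqP => yv; rewrite yv eirr in evy.
    rewrite -DeqC in_comp in yC; case/andP: yC => yS cxy.
    move: vD; rewrite in_comp vS /=; apply/negP/negPn.
    by apply: connect_trans cxy (connect1 _); rewrite /del_rel /= esym evy yS vS.
  have sub : ~: S \subset comp_of e [set v] x1 :|: comp_of e [set v] x2.
    apply/subsetP => x; rewrite inE => xS.
    have xv : x != v by apply: contraNneq xS => ->.
    have DC : comp_of e S x \subset comp_of e [set v] x by rewrite comp_mono // sub1set.
    have sD : g + 1 <= #|comp_of e S x| by apply: szC; apply: imset_f; rewrite inE.
    have mC : comp_of e [set v] x \in components e [set v] by apply: imset_f; rewrite !inE.
    case: (big2 _ mC (leq_trans sD (subset_leq_card DC))) => <-;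
      by rewrite in_setU comp_self ?orbT // inE.
  by have := subset_leq_card sub; have := cardsC S; rewrite cU cT; lia.
split; first by exists (~: (comp_of e [set v] x1 :|: comp_of e [set v] x2)).
split => //; exists (~: (comp_of e [set v] x1 :|: comp_of e [set v] x2)); split => //.
by have := cardsC (comp_of e [set v] x1 :|: comp_of e [set v] x2); rewrite cU cT; lia.
Qed.
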